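(* Let $\mathcal C,\mathcal D$ be 2-categories. Let $L:\mathcal C\boxtimes_{\mathrm{sim}}\mathcal D\to\mathcal C\times\mathcal D$ be the strict 2-functor with $L(C;D)=(C,D)$, $L(n,p,r;m,q,s)=(\circ p,\circ q)$ (the composites $(p)_n\circ\dots\circ(p)_1$ and $(q)_m\circ\dots\circ(q)_1$), and $L(\xi,\alpha;\rho,\beta)=(\alpha_{\bar n}\circ\dots\circ\alpha_1,\ \beta_{\bar m}\circ\dots\circ\beta_1)$. Let $R:\mathcal C\times\mathcal D\to\mathcal C\boxtimes_{\mathrm{sim}}\mathcal D$ be the lax functor with $R(C,D)=(C;D)$, $R(c,d)=$ the 1-cell ''first $d$, then $c$'', i.e. $(1,(c),r_0;1,(d),s_0)$ with $r_0=(0,0,1)$, $s_0=(0,1,1)$ as maps $[2]\to[1]$, $R(\gamma,\delta)=(\mathrm{id}_{[1]},(\gamma);\mathrm{id}_{[1]},(\delta))$, unit comparison at $(C,D)$ the unique 2-cell from the identity to $R(1_C,1_D)$ with identity icon components, and composition comparison $R(c',d')\circ R(c,d)\Rightarrow R(c'\circ c,d'\circ d)$ the 2-cell $(\partial,(1_{c'\circ c});\partial,(1_{d'\circ d}))$ with $\partial:[1]\to[2]$, $0\mapsto0$, $1\mapsto2$. Then $L\circ R=1_{\mathcal C\times\mathcal D}$, and the family of 2-cells $\eta_{(n,p,r;m,q,s)}=(!_{[1]\to[n]},(1_{\circ p});!_{[1]\to[m]},(1_{\circ q})):(n,p,r;m,q,s)\Rightarrow R L(n,p,r;m,q,s)$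 (where $!_{[1]\to[k]}$ sends $0\mapsto0$, $1\mapsto k$) is an icon $\eta:1\Rightarrow R\circ L$ exhibiting $L\dashv R$ (with identity counit) in the 2-category of 2-categories, lax functors and icons.
   Context: All 2-categories are strict and small. An icon between lax functors $F,G:\mathcal X\to\mathcal Y$ that agree on objects is a family of 2-cells $\theta_x:Fx\Rightarrow Gx$, one for each 1-cell $x$, natural in 2-cells of $\mathcal X$ and compatible with the unit and composition comparisons; 2-categories, lax functors and icons form a 2-category. $[n]=\{0<\dots<n\}$ as a category; $\Delta_{\bot\top}$ has objects $[n]$ and morphisms order-preserving maps preserving first and last element. A path of length $n$ in $\mathcal C$ is a 2-functor $p:[n]\to\mathcal C$, with components $(p)_i=p(i-1\to i)$. For $\xi:[\bar n]\to[n]$ in $\Delta_{\bot\top}$, an icon $\alpha:p\circ\xi\Rightarrow\bar p$ is a family of 2-cells $\alpha_i:(p)_{\xi(i)}\circ\dots\circ(p)_{\xi(i-1)+1}\Rightarrow(\bar p)_i$, $i=1..\bar n$ (source an identity if $\xi(i-1)=\xi(i)$). A shuffle of $n,m$ is a pair $r:[n+m]\to[n]$, $s:[n+m]\to[m]$ in $\Delta_{\bot\top}$ such that at each step exactly one of $r,s$ increases by $1$ and the other stays constant. $\mathcal C\boxtimes_{\mathrm{sim}}\mathcal D$: objects pairs $(C;D)$; 1-cells sextuples $(n,p,r;m,q,s)$ with $p$ a path of length $n$ in $\mathcal C$, $q$ a path of length $m$ in $\mathcal D$, $(r,s)$ a shuffle, composed by concatenation (identity: $(0,C,\mathrm{id};0,D,\mathrm{id})$);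 2-cells $(n,p,r;m,q,s)\Rightarrow(\bar n,\bar p,\bar r;\bar m,\bar q,\bar s)$ are $(\xi,\alpha;\rho,\beta)$ with $\xi:[\bar n]\to[n]$, $\rho:[\bar m]\to[m]$ in $\Delta_{\bot\top}$ satisfying $\min r^{-1}(\xi(\bar r(\bar i)))\le\max s^{-1}(\rho(\bar s(\bar i)))$ for all $\bar i\in\{0,\dots,\bar n+\bar m\}$, and icons $\alpha:p\circ\xi\Rightarrow\bar p$, $\beta:q\circ\rho\Rightarrow\bar q$; vertical composite of $(\xi,\alpha;\rho,\beta)$ then $(\bar\xi,\bar\alpha;\bar\rho,\bar\beta)$ is $(\xi\circ\bar\xi,\bar\alpha\bullet(\alpha\bar\xi);\rho\circ\bar\rho,\bar\beta\bullet(\beta\bar\rho))$ with $(\alpha\bar\xi)_i=\alpha_{\bar\xi(i)}\circ\dots\circ\alpha_{\bar\xi(i-1)+1}$; horizontal composition is concatenation. *)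

(* Defs.v *)
From mathcomp Require Import all_boot.
Set Implicit Arguments. Unset Strict Implicit. Unset Printing Implicit Defensive.

(* Strict (small) 2-categories, in "total" (multi-sorted algebraic) form:   *)
(* a type of objects, a type Mor of candidate 1-cells carved out by okM, a  *)
(* type Cel of candidate 2-cells carved out by okC, with source/target maps  *)
(* and composition operations (g ∘ f is [comp1 g f], β • α is [vcomp β α],  *)
(* β ∘ α is [hcomp β α]); laws are required only on well-formed, composable *)
(* arguments.                                                                *)
Record cat2 := Cat2 {
  Ob : Type; Mor : Type; Cel : Type;
  okM : Mor -> Prop; okC : Cel -> Prop;
  src : Mor -> Ob; tgt : Mor -> Ob;
  dom : Cel -> Mor; cod : Cel -> Mor;
  id1 : Ob -> Mor; comp1 : Mor -> Mor -> Mor;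
  id2 : Mor -> Cel; vcomp : Cel -> Cel -> Cel; hcomp : Cel -> Cel -> Cel }.

Record is_2cat (X : cat2) : Prop := Is2cat {
  c_id1 : forall x : Ob X, [/\ okM (id1 x), src (id1 x) = x & tgt (id1 x) = x];
  c_comp1 : forall f g : Mor X, okM f -> okM g -> tgt f = src g ->
    [/\ okM (comp1 g f), src (comp1 g f) = src f & tgt (comp1 g f) = tgt g];
  c_idl : forall f : Mor X, okM f -> comp1 (id1 (tgt f)) f = f;
  c_idr : forall f : Mor X, okM f -> comp1 f (id1 (src f)) = f;
  c_assoc : forall f g h : Mor X, okM f -> okM g -> okM h ->
    tgt f = src g -> tgt g = src h ->
    comp1 h (comp1 g f) = comp1 (comp1 h g) f;
  c_cell : forall a : Cel X, okC a ->
    [/\ okM (dom a), okM (cod a), src (dom a) = src (cod a)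
      & tgt (dom a) = tgt (cod a)];
  c_id2 : forall f : Mor X, okM f -> [/\ okC (id2 f), dom (id2 f) = f & cod (id2 f) = f];
  c_vcomp : forall a b : Cel X, okC a -> okC b -> cod a = dom b ->
    [/\ okC (vcomp b a), dom (vcomp b a) = dom a & cod (vcomp b a) = cod b];
  c_vidl : forall a : Cel X, okC a -> vcomp (id2 (cod a)) a = a;
  c_vidr : forall a : Cel X, okC a -> vcomp a (id2 (dom a)) = a;
  c_vassoc : forall a b c : Cel X, okC a -> okC b -> okC c ->
    cod a = dom b -> cod b = dom c -> vcomp c (vcomp b a) = vcomp (vcomp c b) a;
  c_hcomp : forall a b : Cel X, okC a -> okC b -> tgt (dom a) = src (dom b) ->
    [/\ okC (hcomp b a), dom (hcomp b a) = comp1 (dom b) (dom a)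
      & cod (hcomp b a) = comp1 (cod b) (cod a)];
  c_hidl : forall a : Cel X, okC a -> hcomp (id2 (id1 (tgt (dom a)))) a = a;
  c_hidr : forall a : Cel X, okC a -> hcomp a (id2 (id1 (src (dom a)))) = a;
  c_hassoc : forall a b c : Cel X, okC a -> okC b -> okC c ->
    tgt (dom a) = src (dom b) -> tgt (dom b) = src (dom c) ->
    hcomp c (hcomp b a) = hcomp (hcomp c b) a;
  c_hid2 : forall f g : Mor X, okM f -> okM g -> tgt f = src g ->
    hcomp (id2 g) (id2 f) = id2 (comp1 g f);
  c_interchange : forall a a' b b' : Cel X, okC a -> okC a' -> okC b -> okC b' ->
    cod a = dom a' -> cod b = dom b' -> tgt (dom a) = src (dom b) ->
    hcomp (vcomp b' b) (vcomp a' a) = vcomp (hcomp b' a') (hcomp b a) }.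

Definition prod2 (C D : cat2) : cat2 :=
  @Cat2 (Ob C * Ob D)%type (Mor C * Mor D)%type (Cel C * Cel D)%type
    (fun f => okM f.1 /\ okM f.2) (fun a => okC a.1 /\ okC a.2)
    (fun f => (src f.1, src f.2)) (fun f => (tgt f.1, tgt f.2))
    (fun a => (dom a.1, dom a.2)) (fun a => (cod a.1, cod a.2))
    (fun x => (id1 x.1, id1 x.2)) (fun g f => (comp1 g.1 f.1, comp1 g.2 f.2))
    (fun f => (id2 f.1, id2 f.2)) (fun b a => (vcomp b.1 a.1, vcomp b.2 a.2))
    (fun b a => (hcomp b.1 a.1, hcomp b.2 a.2)).

(* A path (2-functor [n] -> X) is given by its starting object p(0) and the  *)
(* list of its components (p)_1, ..., (p)_n.                                 *)
Record path (X : cat2) := Path { pstart : Ob X; parr : seq (Mor X) }.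

Fixpoint chain (X : cat2) (x : Ob X) (l : seq (Mor X)) : Prop :=
  if l is f :: l' then [/\ okM f, src f = x & chain (tgt f) l'] else True.

Definition path_ok (X : cat2) (p : path X) (n : nat) : Prop :=
  size (parr p) = n /\ chain (pstart p) (parr p).

Definition pobj (X : cat2) (p : path X) (k : nat) : Ob X :=
  foldl (fun _ f => tgt f) (pstart p) (take k (parr p)).

Definition mlist (X : cat2) (x : Ob X) (l : seq (Mor X)) : Mor X :=
  if l is f :: l' then foldl (fun acc g => comp1 g acc) f l' else id1 x.

Definition hlist (X : cat2) (x : Ob X) (l : seq (Cel X)) : Cel X :=
  if l is a :: l' then foldl (fun acc b => hcomp b acc) a l' else id2 (id1 x).

(* entries a+1 .. b (1-indexed) of l *)
Definition slice (T : Type) (l : seq T) (a b : nat) : seq T := take (b - a) (drop a l).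

(* (p)_b ∘ ... ∘ (p)_(a+1), an identity 1_{p(a)} if a = b *)
Definition seg (X : cat2) (p : path X) (a b : nat) : Mor X :=
  mlist (pobj p a) (slice (parr p) a b).

(* f : [a] -> [b] in Δ_{⊥⊤}, represented by its list of values f(0..a) *)
Definition dmap (f : seq nat) (a b : nat) : Prop :=
  [/\ size f = a.+1, nth 0 f 0 = 0, nth 0 f a = b
    & forall i, i < a -> nth 0 f i <= nth 0 f i.+1].

Definition shuffle (r s : seq nat) (n m : nat) : Prop :=
  [/\ dmap r (n + m) n, dmap s (n + m) m
    & forall i, i < n + m ->
        (nth 0 r i.+1 = (nth 0 r i).+1 /\ nth 0 s i.+1 = nth 0 s i) \/
        (nth 0 r i.+1 = nth 0 r i /\ nth 0 s i.+1 = (nth 0 s i).+1)].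

(* min f^{-1}(k) and max f^{-1}(k) for f given by its list of values *)
Definition minpre (f : seq nat) (k : nat) : nat := find (pred1 k) f.
Definition maxpre (f : seq nat) (k : nat) : nat := (size f).-1 - find (pred1 k) (rev f).

(* icon al : p ∘ xi => pb, where pb has length nb *)
Definition icon_ok (X : cat2) (p : path X) (xi : seq nat) (pb : path X) (nb : nat)
    (al : seq (Cel X)) : Prop :=
  size al = nb /\
  forall i (a : Cel X) (f : Mor X), onth al i = Some a -> onth (parr pb) i = Some f ->
    [/\ okC a, dom a = seg p (nth 0 xi i) (nth 0 xi i.+1) & cod a = f].

Record bmor (C D : cat2) := BMor {
  bn : nat; bp : path C; br : seq nat; bm : nat; bq : path D; bs : seq nat }.

Record bcel (C D : cat2) := BCel {
  bdom : bmor C D; bcod : bmor C D;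
  bxi : seq nat; bal : seq (Cel C); brho : seq nat; bbe : seq (Cel D) }.

Section Box.
Variables C D : cat2.

Definition bsrc (f : bmor C D) : Ob C * Ob D := (pstart (bp f), pstart (bq f)).
Definition btgt (f : bmor C D) : Ob C * Ob D := (pobj (bp f) (bn f), pobj (bq f) (bm f)).

Definition bokM (f : bmor C D) : Prop :=
  [/\ path_ok (bp f) (bn f), path_ok (bq f) (bm f) & shuffle (br f) (bs f) (bn f) (bm f)].

Definition bokC (a : bcel C D) : Prop :=
  let f := bdom a in let g := bcod a in
  bokM f /\ bokM g /\ bsrc f = bsrc g /\ btgt f = btgt g /\
  dmap (bxi a) (bn g) (bn f) /\ dmap (brho a) (bm g) (bm f) /\
  (forall i, i <= bn g + bm g ->
     minpre (br f) (nth 0 (bxi a) (nth 0 (br g) i))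
     <= maxpre (bs f) (nth 0 (brho a) (nth 0 (bs g) i))) /\
  icon_ok (bp f) (bxi a) (bp g) (bn g) (bal a) /\
  icon_ok (bq f) (brho a) (bq g) (bm g) (bbe a).

Definition bid1 (x : Ob C * Ob D) : bmor C D :=
  BMor 0 (Path x.1 [::]) [:: 0] 0 (Path x.2 [::]) [:: 0].

Definition bcomp1 (g f : bmor C D) : bmor C D :=
  BMor (bn f + bn g) (Path (pstart (bp f)) (parr (bp f) ++ parr (bp g)))
       (br f ++ map (addn (bn f)) (behead (br g)))
       (bm f + bm g) (Path (pstart (bq f)) (parr (bq f) ++ parr (bq g)))
       (bs f ++ map (addn (bm f)) (behead (bs g))).

Definition bid2 (f : bmor C D) : bcel C D :=
  BCel f f (iota 0 (bn f).+1) (map (@id2 C) (parr (bp f)))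
           (iota 0 (bm f).+1) (map (@id2 D) (parr (bq f))).

(* components of  alb • (al xib)  for the vertical composite *)
Definition vcomp_icon (X : cat2) (al : seq (Cel X)) (p : path X) (xib : seq nat)
    (alb : seq (Cel X)) : seq (Cel X) :=
  [seq vcomp c.1 (hlist (pobj p (nth 0 xib c.2))
                        (slice al (nth 0 xib c.2) (nth 0 xib c.2.+1)))
  | c <- zip alb (iota 0 (size alb))].

Definition bvcomp (b a : bcel C D) : bcel C D :=
  BCel (bdom a) (bcod b)
    (map (nth 0 (bxi a)) (bxi b)) (vcomp_icon (bal a) (bp (bcod a)) (bxi b) (bal b))
    (map (nth 0 (brho a)) (brho b)) (vcomp_icon (bbe a) (bq (bcod a)) (brho b) (bbe b)).

Definition bhcomp (b a : bcel C D) : bcel C D :=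
  BCel (bcomp1 (bdom b) (bdom a)) (bcomp1 (bcod b) (bcod a))
    (bxi a ++ map (addn (bn (bdom a))) (behead (bxi b))) (bal a ++ bal b)
    (brho a ++ map (addn (bm (bdom a))) (behead (brho b))) (bbe a ++ bbe b).

Definition box : cat2 :=
  @Cat2 (Ob C * Ob D)%type (bmor C D) (bcel C D) bokM bokC bsrc btgt
        (@bdom C D) (@bcod C D) bid1 bcomp1 bid2 bvcomp bhcomp.

End Box.

(* lunit x : 1_{Fx} => F(1_x);  lcmp g f : Fg ∘ Ff => F(g ∘ f) *)
Record lax (X Y : cat2) := Lax {
  lobj : Ob X -> Ob Y; lmor : Mor X -> Mor Y; lcel : Cel X -> Cel Y;
  lunit : Ob X -> Cel Y; lcmp : Mor X -> Mor X -> Cel Y }.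

Record is_lax (X Y : cat2) (F : lax X Y) : Prop := IsLax {
  l_mor : forall f : Mor X, okM f ->
    [/\ okM (lmor F f), src (lmor F f) = lobj F (src f) & tgt (lmor F f) = lobj F (tgt f)];
  l_cel : forall a : Cel X, okC a ->
    [/\ okC (lcel F a), dom (lcel F a) = lmor F (dom a) & cod (lcel F a) = lmor F (cod a)];
  l_id2 : forall f : Mor X, okM f -> lcel F (id2 f) = id2 (lmor F f);
  l_vcomp : forall a b : Cel X, okC a -> okC b -> cod a = dom b ->
    lcel F (vcomp b a) = vcomp (lcel F b) (lcel F a);
  l_unit : forall x : Ob X,
    [/\ okC (lunit F x), dom (lunit F x) = id1 (lobj F x)
      & cod (lunit F x) = lmor F (id1 x)];
  l_cmp : forall f g : Mor X, okM f -> okM g -> tgt f = src g ->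
    [/\ okC (lcmp F g f), dom (lcmp F g f) = comp1 (lmor F g) (lmor F f)
      & cod (lcmp F g f) = lmor F (comp1 g f)];
  l_nat : forall a b : Cel X, okC a -> okC b -> tgt (dom a) = src (dom b) ->
    vcomp (lcel F (hcomp b a)) (lcmp F (dom b) (dom a))
    = vcomp (lcmp F (cod b) (cod a)) (hcomp (lcel F b) (lcel F a));
  l_assoc : forall f g h : Mor X, okM f -> okM g -> okM h ->
    tgt f = src g -> tgt g = src h ->
    vcomp (lcmp F h (comp1 g f)) (hcomp (id2 (lmor F h)) (lcmp F g f))
    = vcomp (lcmp F (comp1 h g) f) (hcomp (lcmp F h g) (id2 (lmor F f)));
  l_unitl : forall f : Mor X, okM f ->
    vcomp (lcmp F (id1 (tgt f)) f) (hcomp (lunit F (tgt f)) (id2 (lmor F f)))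
    = id2 (lmor F f);
  l_unitr : forall f : Mor X, okM f ->
    vcomp (lcmp F f (id1 (src f))) (hcomp (id2 (lmor F f)) (lunit F (src f)))
    = id2 (lmor F f) }.

Definition is_strict (X Y : cat2) (F : lax X Y) : Prop :=
  [/\ is_lax F,
      (forall x : Ob X, lmor F (id1 x) = id1 (lobj F x)),
      (forall f g : Mor X, okM f -> okM g -> tgt f = src g ->
         lmor F (comp1 g f) = comp1 (lmor F g) (lmor F f)),
      (forall x : Ob X, lunit F x = id2 (id1 (lobj F x)))
    & (forall f g : Mor X, okM f -> okM g -> tgt f = src g ->
         lcmp F g f = id2 (comp1 (lmor F g) (lmor F f)))].

Definition lax_id (X : cat2) : lax X X :=
  @Lax X X id id id (fun x => id2 (id1 x)) (fun g f => id2 (comp1 g f)).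

Definition lax_comp (X Y Z : cat2) (G : lax Y Z) (F : lax X Y) : lax X Z :=
  @Lax X Z (fun x => lobj G (lobj F x)) (fun f => lmor G (lmor F f))
    (fun a => lcel G (lcel F a))
    (fun x => vcomp (lcel G (lunit F x)) (lunit G (lobj F x)))
    (fun g f => vcomp (lcel G (lcmp F g f)) (lcmp G (lmor F g) (lmor F f))).

Definition lax_eq (X Y : cat2) (F G : lax X Y) : Prop :=
  [/\ (forall x : Ob X, lobj F x = lobj G x),
      (forall f : Mor X, okM f -> lmor F f = lmor G f),
      (forall a : Cel X, okC a -> lcel F a = lcel G a),
      (forall x : Ob X, lunit F x = lunit G x)
    & (forall f g : Mor X, okM f -> okM g -> tgt f = src g -> lcmp F g f = lcmp G g f)].

Definition is_icon (X Y : cat2) (F G : lax X Y) (theta : Mor X -> Cel Y) : Prop :=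
  [/\ (forall x : Ob X, lobj F x = lobj G x),
      (forall f : Mor X, okM f ->
         [/\ okC (theta f), dom (theta f) = lmor F f & cod (theta f) = lmor G f]),
      (forall a : Cel X, okC a ->
         vcomp (lcel G a) (theta (dom a)) = vcomp (theta (cod a)) (lcel F a)),
      (forall x : Ob X, vcomp (theta (id1 x)) (lunit F x) = lunit G x)
    & (forall f g : Mor X, okM f -> okM g -> tgt f = src g ->
         vcomp (theta (comp1 g f)) (lcmp F g f)
         = vcomp (lcmp G g f) (hcomp (theta g) (theta f)))].

Definition icon_id (X Y : cat2) (F : lax X Y) : Mor X -> Cel Y := fun f => id2 (lmor F f).
Definition icon_vcomp (X Y : cat2) (th' th : Mor X -> Cel Y) : Mor X -> Cel Y :=
  fun f => vcomp (th' f) (th f).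
Definition icon_whiskL (X Y Z : cat2) (H : lax Y Z) (th : Mor X -> Cel Y) : Mor X -> Cel Z :=
  fun f => lcel H (th f).
Definition icon_whiskR (W X Y : cat2) (th : Mor X -> Cel Y) (K : lax W X) : Mor W -> Cel Y :=
  fun f => th (lmor K f).

Section LR.
Variables C D : cat2.

Definition Lmor (f : bmor C D) : Mor C * Mor D :=
  (mlist (pstart (bp f)) (parr (bp f)), mlist (pstart (bq f)) (parr (bq f))).

Definition Lfun : lax (box C D) (prod2 C D) :=
  @Lax (box C D) (prod2 C D) id Lmor
    (fun a => (hlist (pstart (bp (bdom a))) (bal a), hlist (pstart (bq (bdom a))) (bbe a)))
    (fun x => (id2 (id1 x.1), id2 (id1 x.2)))
    (fun g f => (id2 (comp1 (Lmor g).1 (Lmor f).1), id2 (comp1 (Lmor g).2 (Lmor f).2))).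

(* R(c,d) = "first d, then c" *)
Definition Rmor (x : Mor C * Mor D) : bmor C D :=
  BMor 1 (Path (src x.1) [:: x.1]) [:: 0; 0; 1] 1 (Path (src x.2) [:: x.2]) [:: 0; 1; 1].

Definition Rfun : lax (prod2 C D) (box C D) :=
  @Lax (prod2 C D) (box C D) id Rmor
    (fun a => BCel (Rmor (dom a.1, dom a.2)) (Rmor (cod a.1, cod a.2))
                   [:: 0; 1] [:: a.1] [:: 0; 1] [:: a.2])
    (fun x => BCel (bid1 x) (Rmor (id1 x.1, id1 x.2))
                   [:: 0; 0] [:: id2 (id1 x.1)] [:: 0; 0] [:: id2 (id1 x.2)])
    (fun g f => BCel (bcomp1 (Rmor g) (Rmor f)) (Rmor (comp1 g.1 f.1, comp1 g.2 f.2))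
                     [:: 0; 2] [:: id2 (comp1 g.1 f.1)] [:: 0; 2] [:: id2 (comp1 g.2 f.2)]).

Definition eta (f : Mor (box C D)) : Cel (box C D) :=
  BCel f (Rmor (Lmor f)) [:: 0; bn f] [:: id2 (Lmor f).1] [:: 0; bm f] [:: id2 (Lmor f).2].

Definition eps : Mor (prod2 C D) -> Cel (prod2 C D) := icon_id (lax_id (prod2 C D)).

End LR.

(* Main.v *)
Require Import Defs.
From mathcomp Require Import all_boot.
Set Implicit Arguments. Unset Strict Implicit. Unset Printing Implicit Defensive.

Lemma take_slice (T : Type) (l : seq T) a b : a <= b -> take b l = take a l ++ slice l a b.
Proof. by move=> ab; rewrite /slice -{1}(subnKC ab) takeD. Qed.

Lemma dmap_mono xi a b : dmap xi a b -> forall i j, i <= j -> j <= a -> nth 0 xi i <= nth 0 xi j.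
Proof.
case=> _ _ _ m i j ij ja; elim: j ij ja => [|j IH] ij ja.
  by rewrite leqn0 in ij; rewrite (eqP ij).
rewrite leq_eqVlt in ij; case/orP: ij => [/eqP -> //|ij].
by apply: leq_trans (IH ij (ltnW ja)) (m _ ja).
Qed.

Lemma dmap_le xi a b i : dmap xi a b -> i <= a -> nth 0 xi i <= b.
Proof. move=> d ia; have := dmap_mono d ia (leqnn a); by case: d => _ _ -> _. Qed.

Lemma iotaS0 k : iota 0 k.+1 = iota 0 k ++ [:: k].
Proof. by rewrite -addn1 iotaD. Qed.

Lemma onth_iota m n i : onth (iota m n) i = if i < n then Some (m + i) else None.
Proof.
elim: n m i => [|n IH] m [|i] //=; first by rewrite addn0.
by rewrite IH ltnS addSnnS.
Qed.

Lemma onth_mapiota (T : Type) (f : nat -> T) n i : i < n -> onth (map f (iota 0 n)) i = Some (f i).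
Proof. by move=> h; rewrite onth_map onth_iota h. Qed.

Lemma onth_lt (T : Type) (l : seq T) i a : onth l i = Some a -> i < size l.
Proof. by move=> h; rewrite -onthTE h. Qed.

Lemma onth_ex (T : Type) (l : seq T) i : i < size l -> exists a, onth l i = Some a.
Proof. by rewrite -onthTE; case: (onth l i) => // a _; exists a. Qed.

Lemma list_of_onth (T : Type) (l : seq T) (f : nat -> T) :
  (forall i a, onth l i = Some a -> a = f i) -> l = map f (iota 0 (size l)).
Proof.
elim: l f => [|a l IH] f //= h.
rewrite -(h 0 a) //; congr cons.
rewrite {1}(IH (fun i => f i.+1)); last by move=> i b hb; apply: h.
elim: (size l) 0 => [|n IHn] m //=; by rewrite IHn.
Qed.

Lemma map_of_onth (T S : Type) (g : T -> S) l1 l2 : size l1 = size l2 ->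
  (forall i a b, onth l1 i = Some a -> onth l2 i = Some b -> g a = b) -> map g l1 = l2.
Proof.
elim: l1 l2 => [|a l1 IH] [|b l2] //= [sz] h.
by rewrite (h 0 a b) // (IH l2 sz) // => i a' b'; apply: (h i.+1).
Qed.

Lemma zip_map2 (A B B' R : Type) (f : A -> B' -> R) (g : B -> B') s t :
  [seq f c.1 (g c.2) | c <- zip s t] = [seq f c.1 c.2 | c <- zip s (map g t)].
Proof. by elim: s t => [|a s IH] [|b t] //=; rewrite IH. Qed.

Section Gen.
Variable X : cat2.
Hypothesis hX : is_2cat X.

Definition endp (x : Ob X) (l : seq (Mor X)) := foldl (fun _ f => tgt f) x l.

Lemma endp_cat x l1 l2 : endp x (l1 ++ l2) = endp (endp x l1) l2.
Proof. by rewrite /endp foldl_cat. Qed.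

Lemma chain_cat x l1 l2 : chain x (l1 ++ l2) <-> chain x l1 /\ chain (endp x l1) l2.
Proof.
elim: l1 x => [|f l IH] x /=; first by split; [move=> h; split | case].
split.
  by case=> ok s /IH [c1 c2]; split.
by case=> [[ok s c1] c2]; split => //; apply/IH.
Qed.

Lemma foldl_typ l (acc : Mor X) : okM acc -> chain (tgt acc) l ->
  [/\ okM (foldl (fun acc g => comp1 g acc) acc l),
      src (foldl (fun acc g => comp1 g acc) acc l) = src acc
    & tgt (foldl (fun acc g => comp1 g acc) acc l) = endp (tgt acc) l].
Proof.
elim: l acc => [|g l IH] acc okacc /=; first by [].
case=> okg sg cl.
have [o s t] := c_comp1 hX okacc okg (esym sg).
have [o' s' t'] := IH _ o (eq_ind_r (fun y => chain y l) cl t).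
by split => //; [exact: etrans s' s | exact: etrans t' (congr1 (fun y => endp y l) t)].
Qed.

Lemma mlist_typ x l : chain x l ->
  [/\ okM (mlist x l), src (mlist x l) = x & tgt (mlist x l) = endp x l].
Proof.
case: l => [|f l] /=; first by move=> _; have := c_id1 hX x.
case=> okf sf cl; have [o s t] := foldl_typ okf cl.
by split => //; rewrite s.
Qed.

Lemma foldl_comp l (acc : Mor X) : okM acc -> chain (tgt acc) l ->
  foldl (fun acc g => comp1 g acc) acc l = comp1 (mlist (tgt acc) l) acc.
Proof.
elim: l acc => [|g l IH] acc okacc /=; first by rewrite (c_idl hX okacc).
case=> okg sg cl.
have [o s t] := c_comp1 hX okacc okg (esym sg).
rewrite IH // ?t // IH //.
have [o1 s1 t1] := mlist_typ cl.
by rewrite (c_assoc hX okacc okg o1 (esym sg) (esym s1)).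
Qed.

Lemma mlist_cat x l1 l2 : chain x (l1 ++ l2) ->
  mlist x (l1 ++ l2) = comp1 (mlist (endp x l1) l2) (mlist x l1).
Proof.
case/chain_cat=> c1 c2.
case: l1 c1 c2 => [|f l1] /= c1 c2.
  by have [o s t] := mlist_typ c2; rewrite -{3}s (c_idr hX o).
case: c1 => okf sf cl1.
rewrite foldl_cat.
have [o s t] := foldl_typ okf cl1.
by rewrite foldl_comp // t.
Qed.


Fixpoint cchain (x : Ob X) (l : seq (Cel X)) : Prop :=
  if l is a :: l' then [/\ okC a, src (dom a) = x & cchain (tgt (dom a)) l'] else True.

Lemma cchain_cat x l1 l2 :
  cchain x (l1 ++ l2) <-> cchain x l1 /\ cchain (endp x (map (@dom X) l1)) l2.
Proof.
elim: l1 x => [|f l IH] x /=; first by split; [move=> h; split | case].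
split.
  by case=> ok s /IH [c1 c2]; split.
by case=> [[ok s c1] c2]; split => //; apply/IH.
Qed.

Lemma cchain_dom x l : cchain x l -> chain x (map (@dom X) l).
Proof.
elim: l x => [|a l IH] x //= [oa sa cl]; have [? ? ? ?] := c_cell hX oa.
by split => //; apply: IH.
Qed.

Lemma cchain_cod x l : cchain x l -> chain x (map (@cod X) l).
Proof.
elim: l x => [|a l IH] x //= [oa sa cl]; have [? ? s t] := c_cell hX oa.
by split => //; [rewrite -s | rewrite -t; apply: IH].
Qed.

Lemma endp_domcod x l : cchain x l -> endp x (map (@dom X) l) = endp x (map (@cod X) l).
Proof.
elim: l x => [|a l IH] x //= [oa sa cl]; have [? ? s t] := c_cell hX oa.
by rewrite /endp /= -/(endp _ _) -/(endp _ _) IH // t.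
Qed.

Lemma hfoldl_typ l (acc : Cel X) : okC acc -> cchain (tgt (dom acc)) l ->
  [/\ okC (foldl (fun acc b => hcomp b acc) acc l),
      dom (foldl (fun acc b => hcomp b acc) acc l)
        = foldl (fun acc g => comp1 g acc) (dom acc) (map (@dom X) l)
    & cod (foldl (fun acc b => hcomp b acc) acc l)
        = foldl (fun acc g => comp1 g acc) (cod acc) (map (@cod X) l)].
Proof.
elim: l acc => [|b l IH] acc okacc /=; first by [].
case=> okb sb cl.
have [o d c] := c_hcomp hX okacc okb (esym sb).
have [ob1 ob2 _ _] := c_cell hX okb.
have [oa1 oa2 _ _] := c_cell hX okacc.
have [_ _ t] := c_comp1 hX oa1 ob1 (esym sb).
have cl' : cchain (tgt (dom (hcomp b acc))) l by rewrite d t.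
have [o' d' c'] := IH _ o cl'.
by split => //; [exact: etrans d' (congr1 (fun y => foldl _ y _) d)
  | exact: etrans c' (congr1 (fun y => foldl _ y _) c)].
Qed.

Lemma hlist_typ x l : cchain x l ->
  [/\ okC (hlist x l), dom (hlist x l) = mlist x (map (@dom X) l)
    & cod (hlist x l) = mlist x (map (@cod X) l)].
Proof.
case: l => [|a l] /=.
  by move=> _; have [o _ _] := c_id1 hX x; have := c_id2 hX o.
by case=> oa sa cl; apply: hfoldl_typ.
Qed.

Lemma hfoldl_comp l (acc : Cel X) : okC acc -> cchain (tgt (dom acc)) l ->
  foldl (fun acc b => hcomp b acc) acc l = hcomp (hlist (tgt (dom acc)) l) acc.
Proof.
elim: l acc => [|b l IH] acc okacc /=; first by rewrite (c_hidl hX okacc).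
case=> okb sb cl.
have [o d c] := c_hcomp hX okacc okb (esym sb).
have [ob1 ob2 _ _] := c_cell hX okb.
have [oa1 oa2 _ _] := c_cell hX okacc.
have [_ _ t] := c_comp1 hX oa1 ob1 (esym sb).
have cl' : cchain (tgt (dom (hcomp b acc))) l by rewrite d t.
rewrite IH // IH // d t.
have [o1 d1 _] := hlist_typ cl.
have [_ s1 _] := mlist_typ (cchain_dom cl).
rewrite (c_hassoc hX okacc okb o1 (esym sb)) // d1 s1 //.
Qed.

Lemma hlist_cat x l1 l2 : cchain x (l1 ++ l2) ->
  hlist x (l1 ++ l2) = hcomp (hlist (endp x (map (@dom X) l1)) l2) (hlist x l1).
Proof.
case/cchain_cat=> c1 c2.
case: l1 c1 c2 => [|f l1] /= c1 c2.
  have [o d _] := hlist_typ c2; have [_ s _] := mlist_typ (cchain_dom c2).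
  by rewrite -{3}s -d (c_hidr hX o).
case: c1 => okf sf cl1.
rewrite foldl_cat.
have [o d _] := hfoldl_typ okf cl1.
have [of1 _ _ _] := c_cell hX okf.
have [_ _ t] := foldl_typ of1 (cchain_dom cl1).
rewrite hfoldl_comp // d t //.
Qed.

Lemma hlist_id2 x l : chain x l -> hlist x (map (@id2 X) l) = id2 (mlist x l).
Proof.
case: l => [|f l] //= [okf sf cl].
elim: l f okf cl {sf} => [|g l IH] f okf //= [okg sg cl].
rewrite (c_hid2 hX okf okg (esym sg)).
have [o _ t] := c_comp1 hX okf okg (esym sg).
by apply: IH => //; rewrite t.
Qed.

Lemma hcomp_tgt (a b : Cel X) : okC a -> okC b -> tgt (dom a) = src (dom b) ->
  tgt (dom (hcomp b a)) = tgt (dom b).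
Proof.
move=> oa ob e; have [_ d _] := c_hcomp hX oa ob e.
have [oa1 _ _ _] := c_cell hX oa; have [ob1 _ _ _] := c_cell hX ob.
by have [_ _ t] := c_comp1 hX oa1 ob1 e; rewrite d t.
Qed.

Lemma hfoldl_inter al bl (a0 b0 : Cel X) : size al = size bl ->
  okC a0 -> okC b0 -> cod a0 = dom b0 ->
  cchain (tgt (dom a0)) al -> cchain (tgt (dom b0)) bl ->
  (forall i a b, onth al i = Some a -> onth bl i = Some b -> cod a = dom b) ->
  foldl (fun acc b => hcomp b acc) (vcomp b0 a0) [seq vcomp c.1 c.2 | c <- zip bl al]
  = vcomp (foldl (fun acc b => hcomp b acc) b0 bl) (foldl (fun acc b => hcomp b acc) a0 al).
Proof.
elim: al bl a0 b0 => [|a al IH] [|b bl] a0 b0 //= [sz] oa0 ob0 e0 [oa sa ca] [ob sb cb] pw.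
have e : cod a = dom b by apply: (pw 0).
rewrite (c_interchange hX oa0 ob0 oa ob e0 e (esym sa)).
have [oh1 d1 c1] := c_hcomp hX oa0 oa (esym sa).
have [oh2 d2 c2] := c_hcomp hX ob0 ob (esym sb).
apply: IH => //.
- by rewrite c1 d2 e e0.
- by rewrite hcomp_tgt.
- by rewrite hcomp_tgt.
- by move=> i a' b' h1 h2; apply: (pw i.+1).
Qed.

Lemma hlist_inter x al bl : size al = size bl -> cchain x al -> cchain x bl ->
  (forall i a b, onth al i = Some a -> onth bl i = Some b -> cod a = dom b) ->
  hlist x [seq vcomp c.1 c.2 | c <- zip bl al] = vcomp (hlist x bl) (hlist x al).
Proof.
case: al bl => [|a al] [|b bl] //= sz.
  move=> _ _ _; have [o _ _] := c_id1 hX x; have [o2 _ c] := c_id2 hX o.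
  by have h := c_vidl hX o2; rewrite c in h; rewrite h.
case=> oa sa ca [ob sb cb] pw.
have e : cod a = dom b by apply: (pw 0).
have [_ _ s t] := c_cell hX oa.
apply: hfoldl_inter => //; first by case: sz.
- by move=> i a' b' h1 h2; apply: (pw i.+1).
Qed.


Lemma chain_take (x : Ob X) (l : seq (Mor X)) j : chain x l -> chain x (take j l).
Proof. by rewrite -{1}(cat_take_drop j l) => /chain_cat []. Qed.

Lemma chain_slice (x : Ob X) (l : seq (Mor X)) a b : chain x l -> a <= b ->
  chain (endp x (take a l)) (slice l a b) /\
  endp (endp x (take a l)) (slice l a b) = endp x (take b l).
Proof.
move=> cl ab; have := chain_take b cl; rewrite (take_slice l ab).
by case/chain_cat=> _ c; split => //; rewrite -endp_cat.
Qed.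

Lemma mlist_slices (x : Ob X) (l : seq (Mor X)) xi k : chain x l -> dmap xi k (size l) ->
  mlist x [seq mlist (endp x (take (nth 0 xi i) l)) (slice l (nth 0 xi i) (nth 0 xi i.+1))
          | i <- iota 0 k] = mlist x l.
Proof.
move=> cl dm.
set E := fun j => endp x (take j l).
set M := fun i => mlist (E (nth 0 xi i)) (slice l (nth 0 xi i) (nth 0 xi i.+1)).
have Mt i : i < k -> [/\ okM (M i), src (M i) = E (nth 0 xi i) & tgt (M i) = E (nth 0 xi i.+1)].
  move=> ik; have le := dmap_mono dm (leqnSn i) ik.
  have [c e] := chain_slice cl le.
  by have [o s t] := mlist_typ c; split => //; rewrite t e.
suff : forall k', k' <= k -> [/\ chain x (map M (iota 0 k')),
    endp x (map M (iota 0 k')) = E (nth 0 xi k')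
  & mlist x (map M (iota 0 k')) = mlist x (take (nth 0 xi k') l)].
  case/(_ k (leqnn k)) => _ _ ->; case: dm => _ _ -> _; by rewrite take_size.
elim=> [|k' IH] lk.
  by move: (dm) => [_ h _ _]; rewrite h /E take0.
have [c1 e1 m1] := IH (ltnW lk).
have [o s t] := Mt _ lk.
have le := dmap_mono dm (leqnSn k') lk.
rewrite iotaS0 map_cat /=.
have cc : chain x (map M (iota 0 k') ++ [:: M k']) by apply/chain_cat; split => //; rewrite e1.
split => //; first by rewrite endp_cat e1 /endp /= -/(endp _ _) t.
rewrite mlist_cat // e1 m1 /= (take_slice l le) mlist_cat //.
by rewrite -(take_slice l le); apply: chain_take.
Qed.


Lemma cchain_take (x : Ob X) (l : seq (Cel X)) j : cchain x l -> cchain x (take j l).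
Proof. by rewrite -{1}(cat_take_drop j l) => /cchain_cat []. Qed.

Lemma cchain_slice (x : Ob X) (l : seq (Cel X)) a b : cchain x l -> a <= b ->
  cchain (endp x (map (@dom X) (take a l))) (slice l a b) /\
  endp (endp x (map (@dom X) (take a l))) (map (@dom X) (slice l a b))
    = endp x (map (@dom X) (take b l)).
Proof.
move=> cl ab; have := cchain_take b cl; rewrite (take_slice l ab).
by case/cchain_cat=> _ c; split => //; rewrite -endp_cat -map_cat.
Qed.

Definition Eh (x : Ob X) (al : seq (Cel X)) j := endp x (take j (map (@cod X) al)).
Definition Gh (x : Ob X) (al : seq (Cel X)) xi i :=
  hlist (Eh x al (nth 0 xi i)) (slice al (nth 0 xi i) (nth 0 xi i.+1)).

Lemma Eh_dom x al j : cchain x al -> Eh x al j = endp x (map (@dom X) (take j al)).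
Proof. by move=> c; rewrite /Eh -map_take -endp_domcod //; apply: cchain_take. Qed.

Lemma Gh_typ x al xi k i : cchain x al -> dmap xi k (size al) -> i < k ->
  [/\ okC (Gh x al xi i),
      dom (Gh x al xi i) = mlist (Eh x al (nth 0 xi i)) (map (@dom X) (slice al (nth 0 xi i) (nth 0 xi i.+1))),
      cod (Gh x al xi i) = mlist (Eh x al (nth 0 xi i)) (slice (map (@cod X) al) (nth 0 xi i) (nth 0 xi i.+1)),
      src (dom (Gh x al xi i)) = Eh x al (nth 0 xi i)
    & tgt (dom (Gh x al xi i)) = Eh x al (nth 0 xi i.+1)].
Proof.
move=> cl dm ik; have le := dmap_mono dm (leqnSn i) ik.
have [cs e] := cchain_slice cl le.
rewrite /Gh !(Eh_dom _ cl).
have [o d c] := hlist_typ cs.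
have [_ s t] := mlist_typ (cchain_dom cs).
by split => //; [rewrite c /slice -map_drop -map_take | rewrite d | rewrite d t e].
Qed.

Lemma hlist_slices x al xi k : cchain x al -> dmap xi k (size al) ->
  cchain x (map (Gh x al xi) (iota 0 k)) /\ hlist x (map (Gh x al xi) (iota 0 k)) = hlist x al.
Proof.
move=> cl dm.
suff : forall k', k' <= k -> [/\ cchain x (map (Gh x al xi) (iota 0 k')),
    endp x (map (@dom X) (map (Gh x al xi) (iota 0 k'))) = Eh x al (nth 0 xi k')
  & hlist x (map (Gh x al xi) (iota 0 k')) = hlist x (take (nth 0 xi k') al)].
  case/(_ k (leqnn k)) => c _ ->; move: (dm) => [_ _ h _]; by rewrite h take_size.
elim=> [|k' IH] lk.
  by move: (dm) => [_ h _ _]; rewrite h /Eh !take0.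
have [c1 e1 m1] := IH (ltnW lk).
have [o d c s t] := Gh_typ cl dm lk.
have le := dmap_mono dm (leqnSn k') lk.
rewrite iotaS0 map_cat /=.
have cc : cchain x (map (Gh x al xi) (iota 0 k') ++ [:: Gh x al xi k'])
  by apply/cchain_cat; split => //; rewrite e1.
split => //; first by rewrite map_cat endp_cat e1 /endp /= -/(endp _ _) t.
rewrite hlist_cat // e1 m1 /= /Gh (Eh_dom _ cl) -hlist_cat.
  by rewrite -(take_slice al le).
by rewrite -(take_slice al le); apply: cchain_take.
Qed.


Lemma pobj_end (p : Defs.path X) n : path_ok p n -> pobj p n = endp (pstart p) (parr p).
Proof. by case=> <- _; rewrite /pobj take_size. Qed.

Lemma path_mlist (p : Defs.path X) n : path_ok p n ->
  [/\ okM (mlist (pstart p) (parr p)), src (mlist (pstart p) (parr p)) = pstart p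
    & tgt (mlist (pstart p) (parr p)) = pobj p n].
Proof. by move=> po; rewrite (pobj_end po); case: po => _ c; apply: mlist_typ. Qed.

Lemma cchain_nth (P : nat -> Ob X) al :
  (forall i a, onth al i = Some a -> [/\ okC a, src (dom a) = P i & tgt (dom a) = P i.+1]) ->
  cchain (P 0) al.
Proof.
elim: al P => [|a al IH] P //= h.
have [o s t] := h 0 a erefl; split => //.
rewrite t; apply: (IH (fun i => P i.+1)) => i b hb; exact: (h i.+1).
Qed.

Lemma icon_elem (p pb : Defs.path X) nb xi al i a : path_ok pb nb -> icon_ok p xi pb nb al ->
  onth al i = Some a ->
  [/\ okC a, dom a = seg p (nth 0 xi i) (nth 0 xi i.+1) & onth (parr pb) i = Some (cod a)].
Proof.
case=> szb _ [sz ic] ha.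
have [f hf] : exists f, onth (parr pb) i = Some f.
  by apply: onth_ex; rewrite szb -sz; apply: onth_lt ha.
by have [o d c] := ic _ _ _ ha hf; rewrite c hf.
Qed.

Lemma icon_facts (p pb : Defs.path X) n nb xi al : path_ok p n -> path_ok pb nb ->
  dmap xi nb n -> icon_ok p xi pb nb al ->
  [/\ cchain (pstart p) al, map (@cod X) al = parr pb,
      map (@dom X) al = [seq seg p (nth 0 xi i) (nth 0 xi i.+1) | i <- iota 0 nb]
    & mlist (pstart p) (map (@dom X) al) = mlist (pstart p) (parr p)].
Proof.
move=> po pbo dm ic.
have e0 : pstart p = pobj p (nth 0 xi 0) by move: (dm) => [_ h _ _]; rewrite h /pobj take0.
have md : map (@dom X) al = [seq seg p (nth 0 xi i) (nth 0 xi i.+1) | i <- iota 0 nb].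
  case: (ic) => sz _; rewrite -sz -(size_map (@dom X)).
  apply: (list_of_onth (l := map (@dom X) al)
    (f := fun i => seg p (nth 0 xi i) (nth 0 xi i.+1))).
  move=> i d; rewrite onth_map; case h: (onth al i) => [a|] //= [<-].
  by have [] := icon_elem pbo ic h.
split => //.
- rewrite e0; apply: (cchain_nth (P := fun i => pobj p (nth 0 xi i))) => i a h.
  have [o d _] := icon_elem pbo ic h.
  have ilt : i < nb by case: ic => <- _; apply: onth_lt h.
  have le := dmap_mono dm (leqnSn i) ilt.
  have [cs e] := chain_slice (proj2 po) le.
  have [o1 s1 t1] := mlist_typ cs.
  by split => //; rewrite d /seg ?s1 // t1 e.
- case: (ic) => sz _; apply: map_of_onth; first by rewrite sz; case: pbo.
  by move=> i a f h hf; have [_ _] := icon_elem pbo ic h; rewrite hf => -[].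
rewrite md; case: po => sz c; apply: mlist_slices => //; by rewrite sz.
Qed.

Lemma icon_hlist (p pb : Defs.path X) n nb xi al : path_ok p n -> path_ok pb nb ->
  dmap xi nb n -> icon_ok p xi pb nb al -> pstart pb = pstart p ->
  [/\ okC (hlist (pstart p) al), dom (hlist (pstart p) al) = mlist (pstart p) (parr p)
    & cod (hlist (pstart p) al) = mlist (pstart pb) (parr pb)].
Proof.
move=> po pbo dm ic e.
have [cc mc md mm] := icon_facts po pbo dm ic.
have [o d c] := hlist_typ cc.
by split => //; [rewrite d mm | rewrite c mc e].
Qed.


Lemma hlist_vcomp_icon (pa pm pb : Defs.path X) na nm nb xa xb al bl :
  path_ok pa na -> path_ok pm nm -> path_ok pb nb -> dmap xa nm na -> dmap xb nb nm ->
  icon_ok pa xa pm nm al -> icon_ok pm xb pb nb bl -> pstart pm = pstart pa ->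
  hlist (pstart pa) (vcomp_icon al pm xb bl)
  = vcomp (hlist (pstart pm) bl) (hlist (pstart pa) al).
Proof.
move=> poa pom pob dma dmb ica icb e1.
have [cca mca _ _] := icon_facts poa pom dma ica.
have [ccb _ _ _] := icon_facts pom pob dmb icb.
have szb : size bl = nb by case: icb.
have sza : size al = nm by case: ica.
have dm' : dmap xb nb (size al) by rewrite sza.
have eg : (fun i => hlist (pobj pm (nth 0 xb i)) (slice al (nth 0 xb i) (nth 0 xb i.+1)))
          =1 Gh (pstart pa) al xb.
  by move=> i; rewrite /Gh /Eh /pobj -mca e1.
rewrite /vcomp_icon (@zip_map2 _ _ _ _ (@vcomp X)
   (fun i => hlist (pobj pm (nth 0 xb i)) (slice al (nth 0 xb i) (nth 0 xb i.+1)))).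
rewrite (eq_map eg) szb.
have [ccg hg] := hlist_slices cca dm'.
rewrite e1 hlist_inter ?hg //; first by rewrite size_map size_iota.
- by rewrite -e1.
move=> i a b ha hb.
have ilt : i < nb by rewrite -szb; apply: onth_lt hb.
rewrite onth_mapiota // in ha; case: ha => <-.
have [_ _ c _ _] := Gh_typ cca dm' ilt.
have [_ d _] := icon_elem pob icb hb.
by rewrite c d /seg /pobj -mca e1.
Qed.


Lemma id2vv (m : Mor X) : okM m -> vcomp (id2 m) (id2 m) = id2 m.
Proof. by move=> om; have [o _ c] := c_id2 hX om; have h := c_vidl hX o; rewrite c in h. Qed.


Lemma hlist_hcat (p pb q qb : Defs.path X) n nb m mb xi xj al bl :
  path_ok p n -> path_ok pb nb -> dmap xi nb n -> icon_ok p xi pb nb al ->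
  pstart pb = pstart p ->
  path_ok q m -> path_ok qb mb -> dmap xj mb m -> icon_ok q xj qb mb bl ->
  pobj pb nb = pstart q ->
  hlist (pstart p) (al ++ bl) = hcomp (hlist (pstart q) bl) (hlist (pstart p) al).
Proof.
move=> po pbo dx ia e1 qo qbo dj ib e2.
have [cca mca _ _] := icon_facts po pbo dx ia.
have [ccb _ _ _] := icon_facts qo qbo dj ib.
have ee : endp (pstart p) (map (@dom X) al) = pstart q.
  by rewrite endp_domcod // mca -e1 -(pobj_end pbo).
rewrite hlist_cat ?ee //; apply/cchain_cat; split => //; by rewrite ee.
Qed.


Lemma assoc_id2 (F G H : Mor X) : okM F -> okM G -> okM H -> tgt F = src G -> tgt G = src H ->
  vcomp (id2 (comp1 H (comp1 G F))) (hcomp (id2 H) (id2 (comp1 G F)))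
  = vcomp (id2 (comp1 (comp1 H G) F)) (hcomp (id2 (comp1 H G)) (id2 F)).
Proof.
move=> oF oG oH e1 e2.
have [oGF _ tGF] := c_comp1 hX oF oG e1.
have [oHG sHG _] := c_comp1 hX oG oH e2.
rewrite (c_hid2 hX oGF oH) ?tGF // (c_hid2 hX oF oHG) ?sHG //.
rewrite (c_assoc hX oF oG oH e1 e2) id2vv //.
have [o _ _] := c_comp1 hX oF oHG (etrans e1 (esym sHG)); by [].
Qed.

Lemma unitl_id2 (F : Mor X) : okM F ->
  vcomp (id2 (comp1 (id1 (tgt F)) F)) (hcomp (id2 (id1 (tgt F))) (id2 F)) = id2 F.
Proof.
move=> oF; have [o s _] := c_id1 hX (tgt F).
by rewrite (c_hid2 hX oF o) // (c_idl hX oF) id2vv.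
Qed.

Lemma unitr_id2 (F : Mor X) : okM F ->
  vcomp (id2 (comp1 F (id1 (src F)))) (hcomp (id2 F) (id2 (id1 (src F)))) = id2 F.
Proof.
move=> oF; have [o _ t] := c_id1 hX (src F).
by rewrite (c_hid2 hX o oF) // (c_idr hX oF) id2vv.
Qed.

End Gen.

Section Box2.
Variables C D : cat2.
Hypothesis hC : is_2cat C.
Hypothesis hD : is_2cat D.

Lemma Lmor_typ (f : bmor C D) : bokM f ->
  [/\ okM (Lmor f).1, okM (Lmor f).2, (src (Lmor f).1, src (Lmor f).2) = bsrc f
    & (tgt (Lmor f).1, tgt (Lmor f).2) = btgt f].
Proof.
case=> pf qf _.
have [o1 s1 t1] := path_mlist hC pf.
have [o2 s2 t2] := path_mlist hD qf.
by split => //=; rewrite ?s1 ?s2 ?t1 ?t2.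
Qed.

Lemma Lcel_typ (a : bcel C D) : bokC a ->
  [/\ okC (hlist (pstart (bp (bdom a))) (bal a)) /\ okC (hlist (pstart (bq (bdom a))) (bbe a)),
      (dom (hlist (pstart (bp (bdom a))) (bal a)), dom (hlist (pstart (bq (bdom a))) (bbe a)))
        = Lmor (bdom a)
    & (cod (hlist (pstart (bp (bdom a))) (bal a)), cod (hlist (pstart (bq (bdom a))) (bbe a)))
        = Lmor (bcod a)].
Proof.
case=> [[pf qf _] [[pg qg _] [es [et [dx [dr [cnd [ia ib]]]]]]]].
have e1 : pstart (bp (bcod a)) = pstart (bp (bdom a)) by move/(congr1 fst): es.
have e2 : pstart (bq (bcod a)) = pstart (bq (bdom a)) by move/(congr1 snd): es.
have [o1 d1 c1] := icon_hlist hC pf pg dx ia e1.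
have [o2 d2 c2] := icon_hlist hD qf qg dr ib e2.
by split; [split | rewrite d1 d2 | rewrite c1 c2].
Qed.


Lemma Lmor_comp (f g : bmor C D) : bokM f -> bokM g -> btgt f = bsrc g ->
  Lmor (bcomp1 g f) = (comp1 (Lmor g).1 (Lmor f).1, comp1 (Lmor g).2 (Lmor f).2).
Proof.
case=> pf qf _ [pg qg _] e.
have e1 : pobj (bp f) (bn f) = pstart (bp g) by move/(congr1 fst): e.
have e2 : pobj (bq f) (bm f) = pstart (bq g) by move/(congr1 snd): e.
rewrite /Lmor /= !mlist_cat //.
- by rewrite -(pobj_end pf) -(pobj_end qf) e1 e2.
- apply/chain_cat; split; first by case: qf.
  by rewrite -(pobj_end qf) e2; case: qg.
- apply/chain_cat; split; first by case: pf.
  by rewrite -(pobj_end pf) e1; case: pg.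
Qed.

Lemma chain_comp1 (f g : bmor C D) : bokM f -> bokM g -> btgt f = bsrc g ->
  chain (pstart (bp f)) (parr (bp f) ++ parr (bp g)).
Proof.
case=> pf qf _ [pg qg _] e.
have e1 : pobj (bp f) (bn f) = pstart (bp g) by move/(congr1 fst): e.
apply/chain_cat; split; first by case: pf.
by rewrite -(pobj_end pf) e1; case: pg.
Qed.

Lemma chain_comp2 (f g : bmor C D) : bokM f -> bokM g -> btgt f = bsrc g ->
  chain (pstart (bq f)) (parr (bq f) ++ parr (bq g)).
Proof.
case=> pf qf _ [pg qg _] e.
have e1 : pobj (bq f) (bm f) = pstart (bq g) by move/(congr1 snd): e.
apply/chain_cat; split; first by case: qf.
by rewrite -(pobj_end qf) e1; case: qg.
Qed.

Lemma Lmor_comp1 (f g : bmor C D) : bokM f -> bokM g -> btgt f = bsrc g ->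
  mlist (pstart (bp f)) (parr (bp f) ++ parr (bp g))
  = comp1 (mlist (pstart (bp g)) (parr (bp g))) (mlist (pstart (bp f)) (parr (bp f))).
Proof. by move=> a b c; move/(congr1 fst): (Lmor_comp a b c). Qed.

Lemma Lmor_comp2 (f g : bmor C D) : bokM f -> bokM g -> btgt f = bsrc g ->
  mlist (pstart (bq f)) (parr (bq f) ++ parr (bq g))
  = comp1 (mlist (pstart (bq g)) (parr (bq g))) (mlist (pstart (bq f)) (parr (bq f))).
Proof. by move=> a b c; move/(congr1 snd): (Lmor_comp a b c). Qed.

Lemma L_strict : is_strict (Lfun C D).
Proof.
split.
- split.
  + move=> f /= /Lmor_typ [o1 o2 s t]; by split.
  + move=> a /= /Lcel_typ [o d c]; by split.
  + move=> f /= [pf qf _].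
    by rewrite !hlist_id2 //; [case: qf | case: pf].
  + move=> a b /= oa ob e.
    have [[pf qf _] [[pg qg _] [es [et [dx [dr [cnd [ia ib]]]]]]]] := oa.
    have [_ [[ph qh _] [es' [et' [dx' [dr' [cnd' [ia' ib']]]]]]]] := ob.
    rewrite -e in ia' ib' dx' dr'.
    have e1 : pstart (bp (bcod a)) = pstart (bp (bdom a)) by move/(congr1 fst): es.
    have e2 : pstart (bq (bcod a)) = pstart (bq (bdom a)) by move/(congr1 snd): es.
    rewrite (hlist_vcomp_icon hC pf pg ph dx dx' ia ia' e1).
    rewrite (hlist_vcomp_icon hD qf qg qh dr dr' ib ib' e2).
    by rewrite -e.
  + move=> x /=.
    have [o1 _ _] := c_id1 hC x.1; have [o2 _ _] := c_id1 hD x.2.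
    have [k1 d1 d1'] := c_id2 hC o1; have [k2 d2 d2'] := c_id2 hD o2.
    split; first by split.
      by rewrite /= d1 d2.
    by rewrite /= d1' d2'.
  + move=> f g /= fo go e.
    have [o1 o2 s t] := Lmor_typ fo.
    have [o1' o2' s' t'] := Lmor_typ go.
    have ee := etrans t (etrans e (esym s')).
    have e1 := congr1 fst ee; have e2 := congr1 snd ee; simpl in e1, e2.
    have [c1 _ _] := c_comp1 hC o1 o1' e1; have [c2 _ _] := c_comp1 hD o2 o2' e2.
    have [k1 d1 d1'] := c_id2 hC c1; have [k2 d2 d2'] := c_id2 hD c2.
    split; first by split.
      by rewrite /= d1 d2.
    by rewrite /= d1' d2' Lmor_comp.
  + move=> a b oa ob e.
    have [[ka kb] da ca] := Lcel_typ oa.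
    have [[kc kd] db cb] := Lcel_typ ob.
    have [[pf qf _] [[pg qg _] [es [et [dx [dr [cnd [ia ib]]]]]]]] := oa.
    have [[ph qh _] [[pk qk _] [es' [et' [dx' [dr' [cnd' [ia' ib']]]]]]]] := ob.
    have e1 : pstart (bp (bcod a)) = pstart (bp (bdom a)) by move/(congr1 fst): es.
    have e2 : pstart (bq (bcod a)) = pstart (bq (bdom a)) by move/(congr1 snd): es.
    have ee := etrans (esym et) e.
    have f1 : pobj (bp (bcod a)) (bn (bcod a)) = pstart (bp (bdom b)) by move/(congr1 fst): ee.
    have f2 : pobj (bq (bcod a)) (bm (bcod a)) = pstart (bq (bdom b)) by move/(congr1 snd): ee.
    rewrite /= (hlist_hcat hC pf pg dx ia e1 ph pk dx' ia' f1).
    rewrite (hlist_hcat hD qf qg dr ib e2 qh qk dr' ib' f2).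
    have [tf _ _ ttf] := Lmor_typ (proj1 oa).
    have [_ _ ssg _] := Lmor_typ (proj1 ob).
    have eh := etrans ttf (etrans e (esym ssg)).
    move: da ca db cb => /= [da1 da2] [ca1 ca2] [db1 db2] [cb1 cb2].
    have h1 : tgt (dom (hlist (pstart (bp (bdom a))) (bal a))) = src (dom (hlist (pstart (bp (bdom b))) (bal b))).
      by rewrite da1 db1; move/(congr1 fst): eh.
    have h2 : tgt (dom (hlist (pstart (bq (bdom a))) (bbe a))) = src (dom (hlist (pstart (bq (bdom b))) (bbe b))).
      by rewrite da2 db2; move/(congr1 snd): eh.
    have [o1 d1 c1] := c_hcomp hC ka kc h1.
    have [o2 d2 c2] := c_hcomp hD kb kd h2.
    rewrite -da1 -da2 -db1 -db2 -d1 -d2 (c_vidr hC o1) (c_vidr hD o2).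
    by rewrite -ca1 -ca2 -cb1 -cb2 -c1 -c2 (c_vidl hC o1) (c_vidl hD o2).
  + move=> f g h fo go ho e1 e2 /=.
    rewrite !Lmor_comp1 // !Lmor_comp2 //.
    have [o1 o2 _ t] := Lmor_typ fo.
    have [o1' o2' s' t'] := Lmor_typ go.
    have [o1'' o2'' s'' _] := Lmor_typ ho.
    have ee := etrans t (etrans e1 (esym s')).
    have ee' := etrans t' (etrans e2 (esym s'')).
    case: ee => g1 g2; case: ee' => h1 h2.
    by rewrite (assoc_id2 hC) // (assoc_id2 hD).
  + move=> f fo /=.
    have [o1 o2 _ t] := Lmor_typ fo.
    case: t => <- <-.
    by rewrite (unitl_id2 hC) // (unitl_id2 hD).
  + move=> f fo /=.
    have [o1 o2 s _] := Lmor_typ fo.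
    case: s => s1 s2; have u1 := unitr_id2 hC o1; have u2 := unitr_id2 hD o2.
    rewrite s1 in u1; rewrite s2 in u2.
    by rewrite u1 u2.
- by [].
- by move=> f g fo go e; apply: Lmor_comp.
- by [].
- by [].
Qed.

Lemma Rmor_ok (x : Mor C * Mor D) : okM x.1 -> okM x.2 -> bokM (Rmor x).
Proof.
move=> o1 o2; split; try by split.
split; try by split => // [[|[|i]]].
by move=> [|[|i]] //= _; [right | left].
Qed.

Lemma icon1 (X : cat2) (c : Cel X) (y y' : Ob X) (f g : Mor X) : okC c -> dom c = f -> cod c = g ->
  icon_ok (Path y [:: f]) [:: 0; 1] (Path y' [:: g]) 1 [:: c].
Proof. move=> o d e; split => // [[|i]] a f0 /=; last by rewrite onth0n. by case=> <-; case=> <-; split. Qed.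


Lemma dmap01 : dmap [:: 0; 1] 1 1.
Proof. by split => // [[|i]]. Qed.

Lemma R_lax : is_lax (Rfun C D).
Proof.
split.
- by move=> f [o1 o2]; split => //; apply: Rmor_ok.
- move=> a [o1 o2].
  have [d1 c1 s1 t1] := c_cell hC o1; have [d2 c2 s2 t2] := c_cell hD o2.
  split => //.
  refine (conj _ (conj _ (conj _ (conj _ (conj _ (conj _ (conj _ (conj _ _)))))))).
  + exact: Rmor_ok.
  + exact: Rmor_ok.
  + exact: (f_equal2 pair s1 s2).
  + by rewrite /btgt /pobj /=; exact: (f_equal2 pair t1 t2).
  + exact: dmap01.
  + exact: dmap01.
  + by move=> [|[|[|i]]].
  + exact: icon1.
  + exact: icon1.
- move=> [f1 f2] [o1 o2] /=.
  have [_ d1 c1] := c_id2 hC o1; have [_ d2 c2] := c_id2 hD o2.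
  by rewrite d1 c1 d2 c2.
- move=> [a1 a2] [b1 b2] [oa1 oa2] [ob1 ob2] [e1 e2] /=.
  have [_ d1 c1] := c_vcomp hC oa1 ob1 e1; have [_ d2 c2] := c_vcomp hD oa2 ob2 e2.
  by rewrite d1 c1 d2 c2.
- move=> [x1 x2] /=.
  have [o1 s1 t1] := c_id1 hC x1; have [o2 s2 t2] := c_id1 hD x2.
  have [k1 d1 c1] := c_id2 hC o1; have [k2 d2 c2] := c_id2 hD o2.
  split => //.
  refine (conj _ (conj _ (conj _ (conj _ (conj _ (conj _ (conj _ (conj _ _)))))))).
  + split; [by split | by split | split; [by split | by split | by []]].
  + exact: (@Rmor_ok (id1 x1, id1 x2) o1 o2).
  + exact: (f_equal2 pair (esym s1) (esym s2)).
  + exact: (f_equal2 pair (esym t1) (esym t2)).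
  + by split => // [[|i]].
  + by split => // [[|i]].
  + by move=> [|[|[|i]]].
  + split => // [[|i]] a f /=; last by rewrite onth0n.
    by case=> <-; case=> <-; split.
  + split => // [[|i]] a f /=; last by rewrite onth0n.
    by case=> <-; case=> <-; split.
- move=> [f1 f2] [g1 g2] [of1 of2] [og1 og2] [e1 e2] /=.
  have [o1 s1 t1] := c_comp1 hC of1 og1 e1; have [o2 s2 t2] := c_comp1 hD of2 og2 e2.
  have [k1 d1 c1] := c_id2 hC o1; have [k2 d2 c2] := c_id2 hD o2.
  split => //.
  refine (conj _ (conj _ (conj _ (conj _ (conj _ (conj _ (conj _ (conj _ _)))))))).
  + split; [by split | by split | split].
    * by split => // [[|[|[|[|i]]]]].
    * by split => // [[|[|[|[|i]]]]].
    * by move=> [|[|[|[|i]]]] // _; [right | left | right | left].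
  + exact: (@Rmor_ok (comp1 g1 f1, comp1 g2 f2) o1 o2).
  + exact: (f_equal2 pair (esym s1) (esym s2)).
  + exact: (f_equal2 pair (esym t1) (esym t2)).
  + by split => // [[|i]].
  + by split => // [[|i]].
  + by move=> [|[|[|i]]].
  + split => // [[|i]] a f /=; last by rewrite onth0n.
    by case=> <-; case=> <-; split.
  + split => // [[|i]] a f /=; last by rewrite onth0n.
    by case=> <-; case=> <-; split.
- move=> [a1 a2] [b1 b2] [oa1 oa2] [ob1 ob2] [e1 e2] /=.
  rewrite /= in oa1 oa2 ob1 ob2.
  have [oh1 dh1 ch1] := c_hcomp hC oa1 ob1 e1; have [oh2 dh2 ch2] := c_hcomp hD oa2 ob2 e2.
  have v1 := c_vidr hC oh1; have v2 := c_vidr hD oh2.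
  have w1 := c_vidl hC oh1; have w2 := c_vidl hD oh2.
  rewrite dh1 in v1; rewrite dh2 in v2; rewrite ch1 in w1; rewrite ch2 in w2.
  rewrite /bvcomp /vcomp_icon /=.
  by rewrite v1 v2 w1 w2 ch1 ch2.
- move=> [f1 f2] [g1 g2] [h1 h2] [of1 of2] [og1 og2] [oh1 oh2] [e1 e2] [e3 e4] /=.
  rewrite /= in of1 of2 og1 og2 oh1 oh2.
  rewrite /bvcomp /bhcomp /vcomp_icon /=.
  rewrite (assoc_id2 hC of1 og1 oh1 e1 e3) (assoc_id2 hD of2 og2 oh2 e2 e4).
  by rewrite (c_assoc hC of1 og1 oh1 e1 e3) (c_assoc hD of2 og2 oh2 e2 e4).
- move=> [f1 f2] [of1 of2] /=.
  rewrite /= in of1 of2.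
  rewrite /bvcomp /bhcomp /vcomp_icon /=.
  by rewrite (unitl_id2 hC of1) (unitl_id2 hD of2) (c_idl hC of1) (c_idl hD of2).
- move=> [f1 f2] [of1 of2] /=.
  rewrite /= in of1 of2.
  rewrite /bvcomp /bhcomp /vcomp_icon /=.
  by rewrite (unitr_id2 hC of1) (unitr_id2 hD of2) (c_idr hC of1) (c_idr hD of2).
Qed.


Lemma LR_eq : lax_eq (lax_comp (Lfun C D) (Rfun C D)) (lax_id (prod2 C D)).
Proof.
split => //.
- by move=> [f1 f2].
- by move=> [a1 a2].
- move=> [x1 x2] /=.
  have [o1 _ _] := c_id1 hC x1; have [o2 _ _] := c_id1 hD x2.
  by rewrite (id2vv hC o1) (id2vv hD o2).
- move=> [f1 f2] [g1 g2] [of1 of2] [og1 og2] [e1 e2] /=.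
  rewrite /= in of1 of2 og1 og2.
  have [o1 _ _] := c_comp1 hC of1 og1 e1; have [o2 _ _] := c_comp1 hD of2 og2 e2.
  by rewrite (id2vv hC o1) (id2vv hD o2).
Qed.


Lemma minpre_le r n N : dmap r N n -> minpre r n <= N.
Proof.
case=> sz _ hN _; rewrite leqNgt; apply/negP => lt.
by have := before_find 0 lt; rewrite hN /= eqxx.
Qed.

Lemma maxpre_end s N m : dmap s N m -> maxpre s m = N.
Proof.
case=> sz _ hN _; rewrite /maxpre sz /=.
have h : nth 0 (rev s) 0 = m by rewrite nth_rev sz // subSS subn0.
case E: (rev s) h => [|a t]; first by move: (size_rev s); rewrite E sz.
by move=> /= ->; rewrite eqxx subn0.
Qed.

Lemma minpre0 r N n : dmap r N n -> minpre r 0 = 0.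
Proof. by case=> sz h _ _; case: r sz h => [|a t] //= _ ->; rewrite eqxx. Qed.

Lemma eta_ok (f : bmor C D) : bokM f -> bokC (eta f).
Proof.
move=> fo; have [o1 o2 s t] := Lmor_typ fo.
have fo' := fo; case: fo' => pf qf [dr ds _].
refine (conj _ (conj _ (conj _ (conj _ (conj _ (conj _ (conj _ (conj _ _)))))))).
- exact: fo.
- exact: (@Rmor_ok (Lmor f) o1 o2).
- by rewrite -s.
- by rewrite -t.
- by split => // [[|i]].
- by split => // [[|i]].
  move=> [|[|[|i]]] //= _; rewrite ?(minpre0 dr) //.
  by rewrite (maxpre_end ds); exact: (minpre_le dr).
- split => // [[|i]] a g /=; last by rewrite onth0n.
  case=> <-; case=> <-; have [k d c] := c_id2 hC o1; split => //.
  by rewrite d /seg /pobj /slice take0 subn0 drop0; case: pf => <- _; rewrite take_size.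
- split => // [[|i]] a g /=; last by rewrite onth0n.
  case=> <-; case=> <-; have [k d c] := c_id2 hD o2; split => //.
  by rewrite d /seg /pobj /slice take0 subn0 drop0; case: qf => <- _; rewrite take_size.
Qed.


Lemma nthiota N : nth 0 (0 :: iota 1 N) N = N.
Proof. by case: N => // N; rewrite -[0 :: _]/(iota 0 N.+2) nth_iota. Qed.

Lemma eta_icon : is_icon (lax_id (box C D)) (lax_comp (Rfun C D) (Lfun C D)) (@eta C D).
Proof.
split => //.
- by move=> f fo; split => //; apply: eta_ok.
- move=> a oa /=.
  rewrite /bvcomp /vcomp_icon /=.
  have [[k1 k2] dd cc] := Lcel_typ oa.
  have [[pf qf _] [[pg qg _] [es [et [dx [dr [cnd [ia ib]]]]]]]] := oa.
  have e1 : pstart (bp (bcod a)) = pstart (bp (bdom a)) by move/(congr1 fst): es.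
  have e2 : pstart (bq (bcod a)) = pstart (bq (bdom a)) by move/(congr1 snd): es.
  have sa : size (bal a) = bn (bcod a) by case: ia.
  have sb : size (bbe a) = bm (bcod a) by case: ib.
  move: (dx) (dr) => [_ x0 xn _] [_ r0 rn _].
  rewrite x0 xn r0 rn cc /slice !subn0 !drop0 -sa -sb !take_size /pobj !take0 e1 e2.
  case: dd => d1 d2; case: cc => c1 c2; rewrite e1 in c1; rewrite e2 in c2.
  rewrite -d1 -d2 (c_vidr hC k1) (c_vidr hD k2).
  by rewrite -c1 -c2 (c_vidl hC k1) (c_vidl hD k2).
- move=> [x1 x2] /=. rewrite /bvcomp /vcomp_icon /=.
  have [o1 _ _] := c_id1 hC x1; have [o2 _ _] := c_id1 hD x2.
  have [_ _ c1] := c_id2 hC o1; have [_ _ c2] := c_id2 hD o2.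
  by rewrite c1 c2.
- move=> f g fo go e /=. rewrite /bvcomp /bhcomp /vcomp_icon /=.
  have [o1 o2 s t] := Lmor_typ fo.
  have [o1' o2' s' t'] := Lmor_typ go.
  have ee := etrans t (etrans e (esym s')).
  case: (ee) => h1 h2.
  have [c1 _ _] := c_comp1 hC o1 o1' h1; have [c2 _ _] := c_comp1 hD o2 o2' h2.
  have [_ _ cc1] := c_id2 hC c1; have [_ _ cc2] := c_id2 hD c2.
  have [[pf qf _] [pg qg _]] := (fo, go).
  rewrite !nthiota /slice !subn0 !drop0.
  have szC : bn f + bn g = size (map (@id2 C) (parr (bp f) ++ parr (bp g))).
    by rewrite size_map size_cat; case: pf => -> _; case: pg => -> _.
  have szD : bm f + bm g = size (map (@id2 D) (parr (bq f) ++ parr (bq g))).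
    by rewrite size_map size_cat; case: qf => -> _; case: qg => -> _.
  rewrite [X in take X (map (@id2 C) _)]szC [X in take X (map (@id2 D) _)]szD !take_size.
  rewrite /pobj !take0 !hlist_id2 /=; try (by apply: chain_comp1); try (by apply: chain_comp2).
  rewrite (Lmor_comp1 fo go e) (Lmor_comp2 fo go e) (Lmor_comp fo go e).
  rewrite (c_hid2 hC o1 o1' h1) (c_hid2 hD o2 o2' h2).
  by rewrite !(id2vv hC c1) !(id2vv hD c2) cc1 cc2.
all: by []. Qed.


Lemma eps_icon : is_icon (lax_comp (Lfun C D) (Rfun C D)) (lax_id (prod2 C D)) (@eps C D).
Proof.
split => //.
- move=> [f1 f2] [o1 o2] /=; rewrite /= in o1 o2.
  have [k1 d1 c1] := c_id2 hC o1; have [k2 d2 c2] := c_id2 hD o2.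
  by split => //=; rewrite ?d1 ?d2 ?c1 ?c2.
- move=> [a1 a2] [o1 o2] /=; rewrite /= in o1 o2.
  by rewrite (c_vidr hC o1) (c_vidr hD o2) (c_vidl hC o1) (c_vidl hD o2).
- move=> [x1 x2] /=.
  have [o1 _ _] := c_id1 hC x1; have [o2 _ _] := c_id1 hD x2.
  by rewrite !(id2vv hC o1) !(id2vv hD o2).
- move=> [f1 f2] [g1 g2] [of1 of2] [og1 og2] [e1 e2] /=.
  rewrite /= in of1 of2 og1 og2.
  have [o1 _ _] := c_comp1 hC of1 og1 e1; have [o2 _ _] := c_comp1 hD of2 og2 e2.
  by rewrite !(id2vv hC o1) !(id2vv hD o2) (c_hid2 hC of1 og1 e1) (c_hid2 hD of2 og2 e2)
    !(id2vv hC o1) !(id2vv hD o2).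
Qed.

Lemma tri1 (f : Mor (box C D)) : okM f ->
  icon_vcomp (icon_whiskR (@eps C D) (Lfun C D)) (icon_whiskL (Lfun C D) (@eta C D)) f
  = icon_id (Lfun C D) f.
Proof.
move=> fo; have [o1 o2 _ _] := Lmor_typ fo.
rewrite /icon_vcomp /icon_whiskR /icon_whiskL /icon_id /eps /=.
by rewrite (id2vv hC o1) (id2vv hD o2).
Qed.

Lemma tri2 (x : Mor (prod2 C D)) : okM x ->
  icon_vcomp (icon_whiskL (Rfun C D) (@eps C D)) (icon_whiskR (@eta C D) (Rfun C D)) x
  = icon_id (Rfun C D) x.
Proof.
case: x => [x1 x2] [o1 o2]; rewrite /= in o1 o2.
rewrite /icon_vcomp /icon_whiskR /icon_whiskL /icon_id /eps /=.
rewrite /bvcomp /vcomp_icon /=.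
have [k1 d1 c1] := c_id2 hC o1; have [k2 d2 c2] := c_id2 hD o2.
by rewrite c1 c2 (id2vv hC o1) (id2vv hD o2).
Qed.

End Box2.

Theorem mainTheorem12 (C D : cat2) (hC : is_2cat C) (hD : is_2cat D) :
  is_strict (Lfun C D) /\
  is_lax (Rfun C D) /\
  lax_eq (lax_comp (Lfun C D) (Rfun C D)) (lax_id (prod2 C D)) /\
  is_icon (lax_id (box C D)) (lax_comp (Rfun C D) (Lfun C D)) (@eta C D) /\
  is_icon (lax_comp (Lfun C D) (Rfun C D)) (lax_id (prod2 C D)) (@eps C D) /\
  (* triangle identity (εL)•(Lη) = 1_L *)
  (forall f : Mor (box C D), okM f ->
     icon_vcomp (icon_whiskR (@eps C D) (Lfun C D))
                (icon_whiskL (Lfun C D) (@eta C D)) f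
     = icon_id (Lfun C D) f) /\
  (* triangle identity (Rε)•(ηR) = 1_R *)
  (forall x : Mor (prod2 C D), okM x ->
     icon_vcomp (icon_whiskL (Rfun C D) (@eps C D))
                (icon_whiskR (@eta C D) (Rfun C D)) x
     = icon_id (Rfun C D) x).
Proof.
split; first exact: L_strict hC hD.
split; first exact: R_lax hC hD.
split; first exact: LR_eq hC hD.
split; first exact: eta_icon hC hD.
split; first exact: eps_icon hC hD.
split; first by move=> f fo; apply: tri1.
by move=> x xo; apply: tri2.
Qed.
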